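(* Let $R$ be a commutative unital ring, $\mathfrak{b}\subsetneq R$ a radical ideal, and $(I_k)_{k=1}^\infty$ countably many ideals of $R$. Suppose that for every $r\in R\setminus\mathfrak{b}$ and every $k\in\mathbb{N}$ there exists $x\in R$ such that $rx\notin\mathfrak{b}$ and $(1-a)x\in\mathfrak{b}$ for some $a\in I_k$. Then there exists a maximal ideal $\mathfrak{m}\subsetneq R$ such that $I_k\not\subseteq\mathfrak{m}$ for all $k\in\mathbb{N}$. *)

(* Defs.v *)
From mathcomp Require Import all_boot all_algebra.
Set Implicit Arguments. Unset Strict Implicit. Unset Printing Implicit Defensive.
Import GRing.Theory.
Local Open Scope ring_scope.

Definition is_ideal (R : comNzRingType) (J : R -> Prop) : Prop :=
  [/\ J 0, (forall x y, J x -> J y -> J (x + y)) & (forall r x, J x -> J (r * x))].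

Definition radical_ideal (R : comNzRingType) (J : R -> Prop) : Prop :=
  is_ideal J /\ (forall (x : R) (n : nat), J (x ^+ n.+1) -> J x).

Definition maximal_ideal (R : comNzRingType) (M : R -> Prop) : Prop :=
  [/\ is_ideal M, ~ M 1 &
      forall J : R -> Prop, is_ideal J -> (forall x, M x -> J x) ->
        (forall x, J x) \/ (forall x, J x <-> M x)].

(* Main.v *)
Require Import Defs.
From mathcomp Require Import all_boot all_algebra.
From mathcomp Require Import boolp classical_sets.
Import GRing.Theory.
Local Open Scope ring_scope.

Lemma ideal_mulr (R : comNzRingType) (J : R -> Prop) x r :
  is_ideal J -> J x -> J (x * r).
Proof. by case=> _ _ hm Jx; rewrite mulrC; apply: hm. Qed.

Lemma exists_max_ideal (R : comNzRingType) (J : R -> Prop) :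
  is_ideal J -> ~ J 1 -> exists m, maximal_ideal m /\ (forall x, J x -> m x).
Proof.
move=> iJ nJ1.
pose Pp (A : R -> Prop) := [/\ is_ideal A, ~ A 1 & forall x, J x -> A x].
pose T := {A : R -> Prop | Pp A}.
pose Rl := fun (s t : T) => `[< forall x, sval s x -> sval t x >].
have [| | | |t tmax] := @Zorn T Rl.
- by move=> s; apply/asboolP.
- by move=> r s t /asboolP h1 /asboolP h2; apply/asboolP => x /h1 /h2.
- move=> [s Ps] [t Pt] /asboolP h1 /asboolP h2.
  have st : s = t by apply: funext => x; apply: propext; split; [apply: h1|apply: h2].
  by subst t; congr exist; apply: Prop_irrelevance.
- move=> A Atot.
  pose U := fun x => J x \/ exists S, A S /\ sval S x.
  have PU : Pp U.
    split.
    - split.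
      + by left; case: iJ.
      + move=> x y [Jx|[S [AS Sx]]] [Jy|[S' [AS' Sy]]].
        * by left; case: iJ => _ ha _; apply: ha.
        * right; exists S'; split => //; case: (svalP S') => [[_ ha _] _ hJ].
          by apply: ha => //; apply: hJ.
        * right; exists S; split => //; case: (svalP S) => [[_ ha _] _ hJ].
          by apply: ha => //; apply: hJ.
        * have [/asboolP h|/asboolP h] := Atot _ _ AS AS'.
            right; exists S'; split => //; case: (svalP S') => [[_ ha _] _ hJ].
            by apply: ha => //; apply: h.
          right; exists S; split => //; case: (svalP S) => [[_ ha _] _ hJ].
          by apply: ha => //; apply: h.
      + move=> r x [Jx|[S [AS Sx]]].
          by left; case: iJ => _ _ hm; apply: hm.
        right; exists S; split => //; case: (svalP S) => [[_ _ hm] _ _].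
        by apply: hm.
    - case=> // -[S [_ S1]]; by case: (svalP S) => _ /(_ S1).
    - by move=> x Jx; left.
  exists (exist _ U PU) => s As; apply/asboolP => x sx /=.
  by right; exists s.
have PJ : Pp J by split => //.
exists (sval t); case: (svalP t) => it nt1 Jt.
split => //; split => // K iK tK.
have [K1|nK1] := pselect (K 1).
  by left => x; rewrite -(mulr1 x); case: iK => _ _ hm; apply: hm.
right.
have PK : Pp K by split => // x /Jt /tK.
have := tmax (exist _ K PK).
move=> h; have e : exist _ K PK = t.
  by apply: h; apply/asboolP.
by move=> x; rewrite -e.
Qed.

Theorem mainTheorem19 (R : comNzRingType) (b : R -> Prop) (I : nat -> R -> Prop)
  (hb : radical_ideal b) (hb_proper : ~ b 1)
  (hI : forall k, is_ideal (I k))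
  (H : forall r : R, ~ b r -> forall k : nat,
         exists x : R, ~ b (r * x) /\ exists2 a : R, I k a & b ((1 - a) * x)) :
  exists m : R -> Prop, maximal_ideal m /\ forall k : nat, ~ (forall x, I k x -> m x).
Proof.
case: hb => ib _.
pose S := {r : R | ~ b r}.
have step : forall (s : S) (k : nat),
    {x : R | ~ b (sval s * x) /\ exists2 a : R, I k a & b ((1 - a) * x)}.
  by move=> s k; apply: cid; apply: H; apply: (svalP s).
pose nxt (k : nat) (s : S) : S :=
  exist (fun r => ~ b r) (sval s * sval (step s k)) (proj1 (svalP (step s k))).
pose rs := fix go (n : nat) : S := match n with 0%N => exist _ 1 hb_proper | n'.+1 => nxt n' (go n') end.
have rsS n : sval (rs n.+1) = sval (rs n) * sval (step (rs n) n) by [].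
have div N M : (N <= M)%N -> exists c, sval (rs M) = sval (rs N) * c.
  elim: M => [|M IH]; first by rewrite leqn0 => /eqP ->; exists 1; rewrite mulr1.
  rewrite leq_eqVlt => /orP[/eqP ->|]; first by exists 1; rewrite mulr1.
  rewrite ltnS => /IH [c hc]; exists (c * sval (step (rs M) M)).
  by rewrite rsS; set x := sval (step _ _); rewrite hc mulrA.
pose J := fun y => exists N, b (y * sval (rs N)).
have iJ : is_ideal J.
  split.
  - by exists 0%N; rewrite mul0r; case: ib.
  - move=> x y [N hN] [M hM]; exists (maxn N M).
    have [c hc] := div N (maxn N M) (leq_maxl _ _).
    have [d hd] := div M (maxn N M) (leq_maxr _ _).
    rewrite mulrDl; case: (ib) => _ ha _; apply: ha.
      by rewrite hc mulrA; apply: ideal_mulr.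
    by rewrite hd mulrA; apply: ideal_mulr.
  - move=> r x [N hN]; exists N; rewrite -mulrA; case: ib => _ _ hm; exact: hm.
have nJ1 : ~ J 1 by move=> [N]; rewrite mul1r; apply: (svalP (rs N)).
have [m [mm Jm]] := @exists_max_ideal _ J iJ nJ1.
exists m; split => // k hk.
case: (proj2 (svalP (step (rs k) k))) => a Ika hab.
have J1a : J (1 - a).
  exists k.+1; rewrite rsS mulrCA; case: ib => _ _ hm; exact: hm.
case: mm => [[_ ha _] nm1 _]; apply: nm1.
have := ha _ _ (Jm _ J1a) (hk _ Ika).
by rewrite subrK.
Qed.
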